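(* For every temporal graph with static graph $G=(V,E)$ and lifetime $T_{\max}$ and every $\delta$, there is a strategy for the Discoverer that wins the ideal patient zero game in $T_{\max}|V|$ rounds.
   Context: A temporal graph $\mathcal G=(V,E,\lambda)$ with lifetime $T_{\max}$ consists of a finite undirected static graph $(V,E)$ and a labeling $\lambda:E\to\{1,\dots,T_{\max}\}$; edge $e$ is present only at time $\lambda(e)$. Infection model with parameter $\delta\in\mathbb N^+$: a seed $(u,t)$ makes $u$ infected at time $t$; otherwise a susceptible node $u$ becomes infected at time $t$ iff some neighbour $v$ infectious at time $t$ has $\lambda(uv)=t$ (exactly one infector recorded if several exist). A node infected at time $t$ is infectious at times $t+1,\dots,t+\delta$ and resistant afterwards. In each round the Discoverer (who knows $V$ and $E$) submits seed infections and the Adversary returns a consistent infection log (triples $(u,v,t)$: $u$ infected $v$ at time $t$) under some labeling consistent with all previous answers. A node $v$ is an ideal patient zero with time $t$ (and $(v,t)$ an IPZ pair) if seed-infecting only $(v,t)$ causes every node to become infected. In the IPZ game the Discoverer finally submits a pair $(u,t)$ or $\bot$; it loses if the pair is not an IPZ pair or if it submits $\bot$ while an IPZ pair exists, for some labeling consistent with all logs; otherwise it wins. *)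

(* Defs.v *)
From mathcomp Require Import all_boot.
Set Implicit Arguments. Unset Strict Implicit. Unset Printing Implicit Defensive.

Section TemporalInfection.
Variables (V : finType) (e : rel V) (Tmax delta : nat).

(* seed infections (u,t) and infection logs (u,v,t) : "u infected v at time t" *)
Definition seeds := seq (V * nat).
Definition inflog := seq (V * V * nat).

(* a labeling lambda : E -> {1..Tmax}, represented as a function on pairs,
   symmetric on edges (edges are undirected); values off edges are irrelevant *)
Definition labeling (lab : V -> V -> nat) : Prop :=
  forall u v, e u v -> lab u v = lab v u /\ 1 <= lab u v <= Tmax.

(* cur v = Some t' : v was infected at time t'; v is infectious at t'+1..t'+delta *)
Definition infectious (cur : V -> option nat) (v : V) (t : nat) : bool :=
  if cur v is Some t' then (t' < t) && (t <= t' + delta) else false.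

Definition trigger (lab : V -> V -> nat) (S : seeds) (cur : V -> option nat)
    (u : V) (t : nat) : bool :=
  ((u, t) \in S) || [exists v, [&& e u v, lab u v == t & infectious cur v t]].

Definition step (lab : V -> V -> nat) (S : seeds) (t : nat)
    (cur : V -> option nat) : V -> option nat :=
  fun u => if cur u is Some t' then Some t'
           else if trigger lab S cur u t then Some t else None.

Fixpoint infAt (lab : V -> V -> nat) (S : seeds) (t : nat) : V -> option nat :=
  match t with
  | 0 => step lab S 0 (fun _ => None)
  | t'.+1 => step lab S t'.+1 (infAt lab S t')
  end.

Definition inf_time (lab : V -> V -> nat) (S : seeds) : V -> option nat :=
  infAt lab S Tmax.

Definition valid_log (lab : V -> V -> nat) (S : seeds) (L : inflog) : Prop :=
  (forall u v t, (u, v, t) \in L ->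
     [/\ inf_time lab S v = Some t, (v, t) \notin S, e u v, lab u v = t
       & infectious (inf_time lab S) u t]) /\
  (forall v t, inf_time lab S v = Some t -> (v, t) \notin S ->
     exists! u, (u, v, t) \in L).

Definition IPZ (lab : V -> V -> nat) (v : V) (t : nat) : Prop :=
  1 <= t <= Tmax /\ forall u, inf_time lab [:: (v, t)] u != None.

(* correctness of the Discoverer's final answer (None = bottom) *)
Definition answer_correct (lab : V -> V -> nat) (a : option (V * nat)) : Prop :=
  match a with
  | Some (v, t) => IPZ lab v t
  | None => forall v t, ~ IPZ lab v t
  end.

(* lab is consistent with the first k rounds, where round j's query is
   query (take j r) and its answer is the j-th log of r *)
Definition consistent_upto (query : seq inflog -> seeds) (r : seq inflog)
    (lab : V -> V -> nat) (k : nat) : Prop :=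
  forall j, j < k -> valid_log lab (query (take j r)) (nth [::] r j).

(* An adaptive Discoverer strategy (query, answer) wins the IPZ game in n
   rounds: for every admissible behaviour of the Adversary (each answer is
   consistent with some labeling consistent with all previous answers), the
   final answer is correct for every labeling consistent with all logs. *)
Definition wins_IPZ_in (n : nat) (query : seq inflog -> seeds)
    (answer : seq inflog -> option (V * nat)) : Prop :=
  (forall h s, s \in query h -> 1 <= s.2 <= Tmax) /\
  forall r : seq inflog, size r = n ->
    (forall i, i < n -> exists lab, labeling lab /\ consistent_upto query r lab i.+1) ->
    forall lab, labeling lab -> consistent_upto query r lab n ->
      answer_correct lab (answer r).

End TemporalInfection.

(* Main.v *)
Require Import Defs.
From mathcomp Require Import all_boot.

Section Aux.
Variables (V : finType) (e : rel V) (Tmax delta : nat).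

Lemma step_some lab S t cur u x : cur u = Some x -> step e delta lab S t cur u = Some x.
Proof. by rewrite /step => ->. Qed.

Lemma infAt_mono lab S t u x k :
  infAt e delta lab S t u = Some x -> infAt e delta lab S (t + k) u = Some x.
Proof.
move=> H; elim: k => [|k IH]; first by rewrite addn0.
by rewrite addnS /=; apply: step_some.
Qed.

Lemma infAt_seed lab S v t : (v, t) \in S -> infAt e delta lab S t v != None.
Proof.
move=> H; case: t H => [|t] H /=; rewrite /step /trigger H //=.
by case: (infAt _ _ _ _ _ _).
Qed.

Lemma seed_inf lab v t : t <= Tmax -> inf_time e Tmax delta lab [:: (v, t)] v != None.
Proof.
move=> le; rewrite /inf_time -(subnKC le).
case E: (infAt e delta lab [:: (v, t)] t v) => [x|].
  by rewrite (infAt_mono _ _ _ _ _ (Tmax - t) E).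
by move: (infAt_seed lab _ _ _ (mem_head (v, t) [::])); rewrite E.
Qed.

Definition goodp (pL : (V * nat) * inflog V) : bool :=
  [forall u, (u == pL.1.1) || has (fun x => x.1.2 == u) pL.2].

Lemma goodP lab v t L : 1 <= t <= Tmax ->
  valid_log e Tmax delta lab [:: (v, t)] L ->
  goodp ((v, t), L) <-> IPZ e Tmax delta lab v t.
Proof.
move=> ht [H1 H2]; split.
  move=> /forallP G; split => // u.
  case/orP: (G u) => /=.
    by move/eqP ->; apply: seed_inf; case/andP: ht.
  case/hasP => [[[w u'] t']] /= Hin /eqP Eu; subst u'.
  by case: (H1 _ _ _ Hin) => ->.
case=> _ I; apply/forallP => u /=.
case: (eqVneq u v) => [//|neq] /=.
move: (I u); case E: (inf_time _ _ _ _ _ u) => [t'|] // _.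
have nS : (u, t') \notin [:: (v, t)].
  by rewrite inE xpair_eqE negb_and neq.
case: (H2 _ _ E nS) => w [Hw _].
by apply/hasP; exists (w, u, t').
Qed.

End Aux.
Arguments goodp {V}.
Arguments goodP {V e Tmax delta lab v t L}.

Theorem mainTheorem10 (V : finType) (e : rel V) (Hsym : symmetric e)
    (Hirr : irreflexive e) (Tmax delta : nat) (Hdelta : 0 < delta) :
  exists2 n, n <= Tmax * #|V| &
    exists (query : seq (inflog V) -> seeds V)
           (answer : seq (inflog V) -> option (V * nat)),
      wins_IPZ_in e Tmax delta n query answer.
Proof.
pose P := allpairs (fun t (v : V) => (v, t)) (iota 1 Tmax) (enum V).
have sP : size P = Tmax * #|V| by rewrite size_allpairs size_iota cardE.
have inP : forall s, s \in P -> 1 <= s.2 <= Tmax.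
  move=> s /allpairsP [[t v]] /= [ht _ ->] /=.
  by move: ht; rewrite mem_iota add1n ltnS.
exists (Tmax * #|V|) => //.
exists (fun h => if drop (size h) P is x :: _ then [:: x] else [::]).
exists (fun r => if [seq x <- zip P r | goodp x] is (p, _) :: _ then Some p else None).
split.
  move=> h s; case E: (drop (size h) P) => [|x l] //.
  rewrite inE => /eqP ->; apply: inP.
  by rewrite -(cat_take_drop (size h) P) E mem_cat mem_head orbT.
move=> r sr _ lab _ C.
have Q : forall j, j < Tmax * #|V| -> forall d,
    valid_log e Tmax delta lab [:: nth d P j] (nth [::] r j).
  move=> j lj d; move: (C j lj).
  rewrite size_takel ?sr ?(ltnW lj) // (drop_nth d) ?sP //.
have szz : size (zip P r) = Tmax * #|V| by rewrite size_zip sP sr minnn.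
case E: [seq x <- zip P r | goodp x] => [|[[v t] L] l] /=.
  move=> v t Hi.
  have hin : (v, t) \in P.
    case: Hi => /andP [h1 h2] _; apply/allpairsP; exists (t, v) => /=.
    by rewrite mem_iota add1n ltnS h1 h2 mem_enum.
  pose j := index (v, t) P.
  have lj : j < Tmax * #|V| by rewrite -sP index_mem.
  have Ev : nth (v, t) P j = (v, t) by rewrite nth_index.
  have G : goodp ((v, t), nth [::] r j).
    apply/(goodP (inP _ hin)); last exact: Hi.
    by rewrite -{1}Ev; apply: Q.
  have : ((v, t), nth [::] r j) \in [seq x <- zip P r | goodp x].
    rewrite mem_filter G /= -Ev -nth_zip ?sP ?sr //.
    by apply: mem_nth; rewrite szz.
  by rewrite E.
have : ((v, t), L) \in [seq x <- zip P r | goodp x] by rewrite E mem_head.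
rewrite mem_filter => /andP [G Hz].
have hv := Hz.
move: Hz => /(nthP ((v, t), L)) [j lj Ej].
rewrite szz in lj.
rewrite nth_zip ?sP ?sr // in Ej.
case: Ej => Ep Er.
have hin : (v, t) \in P by rewrite -Ep mem_nth ?sP.
apply/(goodP (inP _ hin)); last exact: G.
have Er2 : nth [::] r j = L by rewrite (set_nth_default L) ?sr.
by move: (Q j lj (v, t)); rewrite Ep Er2.
Qed.
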